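(* Let $n$ be a positive integer, let $\mathcal F$ be an $\mathcal N$-saturated family of subsets of $[n]$, and let $\mathcal G$ be a component of $\mathcal F$. Let $B_1,\dots,B_l$ be the minimal elements and $A_1,\dots,A_k$ the maximal elements of $\mathcal G$. Let $M\in\mathcal F$ be such that $\bigcup_{i=1}^l B_i\subseteq M\subseteq\bigcap_{i=1}^k A_i$, and such that $M$ is maximal (with respect to inclusion) among the sets of $\mathcal F$ with this property. Then every $X\in\mathcal G$ is comparable to $M$.
   Context: The poset $\mathcal N$ has four elements $a,b,c,d$ with $a<c$, $b<c$, $b<d$ and no other comparabilities. A family $\mathcal Q$ of sets (ordered by inclusion) contains an induced copy of $\mathcal N$ if there are distinct sets in $\mathcal Q$ whose inclusion relations are exactly those of $a,b,c,d$ above. A family $\mathcal F$ of subsets of $[n]=\{1,\dots,n\}$ is $\mathcal N$-saturated if $\mathcal F$ contains no induced copy of $\mathcal N$, but for every $S\subseteq[n]$ with $S\notin\mathcal F$, the family $\mathcal F\cup\{S\}$ contains an induced copy of $\mathcal N$. A component of $\mathcal F$ is the vertex set of a connected component of the Hasse diagram (as a graph) of the poset $(\mathcal F\setminus\{\emptyset,[n]\},\subseteq)$; its minimal and maximal elements are taken with respect to inclusion within the component. *)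

(* Defs.v *)
(* Subsets of [n] = {1..n} are modelled as {set 'I_n}. *)
From mathcomp Require Import all_boot.
Set Implicit Arguments. Unset Strict Implicit. Unset Printing Implicit Defensive.

Section NSat.
Variable n : nat.
Notation sT := {set 'I_n}.

Definition set_comparable (X Y : sT) : bool := (X \subset Y) || (Y \subset X).

Definition contains_induced_N (Q : {set sT}) : Prop :=
  exists a b c d : sT,
    [/\ [/\ a \in Q, b \in Q, c \in Q & d \in Q],
        uniq [:: a; b; c; d],
        [/\ a \proper c, b \proper c & b \proper d] &
        [/\ ~~ set_comparable a b, ~~ set_comparable a d & ~~ set_comparable c d]].

Definition N_saturated (F : {set sT}) : Prop :=
  ~ contains_induced_N F /\
  forall S : sT, S \notin F -> contains_induced_N (S |: F).

Definition inner (F : {set sT}) : {set sT} := F :\: [set set0; setT].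

Definition covers (P : {set sT}) (X Y : sT) : bool :=
  [&& X \in P, Y \in P, X \proper Y &
      ~~ [exists Z in P, (X \proper Z) && (Z \proper Y)]].

Definition hasse (F : {set sT}) : rel sT :=
  fun X Y => covers (inner F) X Y || covers (inner F) Y X.

Definition is_component (F G : {set sT}) : Prop :=
  exists2 X0, X0 \in inner F & G = [set Y | connect (hasse F) X0 Y].

Definition minimal_in (G : {set sT}) (X : sT) : bool :=
  (X \in G) && ~~ [exists Y in G, Y \proper X].
Definition maximal_in (G : {set sT}) (X : sT) : bool :=
  (X \in G) && ~~ [exists Y in G, X \proper Y].

Definition between (G : {set sT}) (M : sT) : bool :=
  ((\bigcup_(B | minimal_in G B) B) \subset M) &&
  (M \subset \bigcap_(A | maximal_in G A) A).

End NSat.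

(* Main.v *)
Require Import Defs.
From mathcomp Require Import all_boot.
From mathcomp Require Import zify.

Set Implicit Arguments. Unset Strict Implicit. Unset Printing Implicit Defensive.

Lemma ne_inc n (x y : {set 'I_n}) : ~~ set_comparable x y -> x != y.
Proof. by apply: contra => /eqP->; rewrite /set_comparable subxx. Qed.

Lemma ne_pr n (x y : {set 'I_n}) : x \proper y -> x != y.
Proof. by apply: contraTneq => ->; rewrite properxx. Qed.

Lemma incP n (x y : {set 'I_n}) :
  ~~ (x \subset y) -> ~~ (y \subset x) -> ~~ set_comparable x y.
Proof. by move=> h1 h2; rewrite /set_comparable negb_or h1 h2. Qed.

Lemma inc_sym n (x y : {set 'I_n}) : ~~ set_comparable x y -> ~~ set_comparable y x.
Proof. by rewrite /set_comparable orbC. Qed.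

Lemma inc_l n (x y : {set 'I_n}) : ~~ set_comparable x y -> ~~ (x \subset y).
Proof. by rewrite /set_comparable negb_or => /andP[]. Qed.

Lemma inc_r n (x y : {set 'I_n}) : ~~ set_comparable x y -> ~~ (y \subset x).
Proof. by rewrite /set_comparable negb_or => /andP[]. Qed.

Lemma neS (T : eqType) (x y : T) : x != y -> y != x.
Proof. by rewrite eq_sym. Qed.

Lemma mkN n (F : {set {set 'I_n}}) a b c d :
  a \in F -> b \in F -> c \in F -> d \in F ->
  a \proper c -> b \proper c -> b \proper d ->
  ~~ set_comparable a b -> ~~ set_comparable a d -> ~~ set_comparable c d ->
  contains_induced_N F.
Proof.
move=> aF bF cF dF ac bc bd nab nad ncd; exists a, b, c, d; split => //.
rewrite /= !inE !negb_or (ne_inc nab) (ne_pr ac) (ne_inc nad) (ne_pr bc) (ne_pr bd).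
by rewrite (ne_inc ncd).
Qed.

Lemma hasse_inner n (F : {set {set 'I_n}}) u v : hasse F u v -> v \in inner F.
Proof. by case/orP => /and4P[]. Qed.

Lemma path_inner n (F : {set {set 'I_n}}) p x0 :
  x0 \in inner F -> path (hasse F) x0 p -> last x0 p \in inner F.
Proof.
elim: p x0 => [|y p IH] x0 //= x0i /andP[h hp].
exact: IH (hasse_inner h) hp.
Qed.

Lemma G_inner n (F G : {set {set 'I_n}}) x :
  is_component F G -> x \in G -> x \in inner F.
Proof.
move=> [X0 X0i ->]; rewrite inE => /connectP[p hp ->].
exact: path_inner.
Qed.

Lemma innerE n (F : {set {set 'I_n}}) x :
  (x \in inner F) = [&& x \in F, x != set0 & x != setT].
Proof. by rewrite /inner !inE negb_or andbC andbA. Qed.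

Lemma G_F n (F G : {set {set 'I_n}}) x :
  is_component F G -> x \in G -> x \in F.
Proof. by move=> hc /(G_inner hc); rewrite innerE => /and3P[]. Qed.

Lemma chain_connect n (F : {set {set 'I_n}}) k : forall x y,
  x \in inner F -> y \in inner F -> x \proper y -> #|y| - #|x| <= k ->
  connect (hasse F) x y.
Proof.
elim: k => [|k IH] x y xi yi xy.
  by have := proper_card xy; lia.
move=> hk.
case: (boolP (covers (inner F) x y)) => hc.
  by apply: connect1; rewrite /hasse hc.
have: [exists Z in inner F, (x \proper Z) && (Z \proper y)].
  by move: hc; rewrite /covers xi yi xy /= negbK.
case/existsP => z /and3P[zi xz zy].
have c1 := proper_card xz; have c2 := proper_card zy.
apply: connect_trans (IH x z xi zi xz _) (IH z y zi yi zy _); lia.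
Qed.

Lemma hasse_sym n (F : {set {set 'I_n}}) : symmetric (hasse F).
Proof. by move=> x y; rewrite /hasse orbC. Qed.

Lemma down_closed n (F G : {set {set 'I_n}}) x y :
  is_component F G -> y \in G -> x \in inner F -> x \subset y -> x \in G.
Proof.
move=> hc yG xi xy.
have yi := G_inner hc yG.
move: hc yG => [X0 X0i GE]; rewrite GE !inE => cy.
case: (eqVneq x y) => [->//|nxy].
have pxy : x \proper y by rewrite properEneq nxy.
have := chain_connect (k := #|y| - #|x|) xi yi pxy (leqnn _).
rewrite (sym_connect_sym (@hasse_sym n F)) => cyx.
exact: connect_trans cy cyx.
Qed.

Lemma ex_min n (G : {set {set 'I_n}}) y :
  y \in G -> exists2 B, minimal_in G B & B \subset y.
Proof.
move=> yG.
have Py : (fun B => (B \in G) && (B \subset y)) y by rewrite /= yG subxx.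
case: (@arg_minnP _ y (fun B => (B \in G) && (B \subset y)) (fun B : {set 'I_n} => #|B|) Py) => B /andP[BG By] Bmin.
exists B => //; rewrite /minimal_in BG /=.
apply/existsP => -[Z /andP[ZG ZB]].
have := Bmin Z; rewrite ZG (subset_trans (proper_sub ZB) By) => /(_ isT).
by have := proper_card ZB; lia.
Qed.

Lemma ex_max n (G : {set {set 'I_n}}) y :
  y \in G -> exists2 A, maximal_in G A & y \subset A.
Proof.
move=> yG.
have Py : (fun B => (B \in G) && (y \subset B)) y by rewrite /= yG subxx.
case: (@arg_maxnP _ y (fun B => (B \in G) && (y \subset B)) (fun B : {set 'I_n} => #|B|) Py) => B /andP[BG By] Bmax.
exists B => //; rewrite /maximal_in BG /=.
apply/existsP => -[Z /andP[ZG ZB]].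
have := Bmax Z; rewrite ZG (subset_trans By (proper_sub ZB)) => /(_ isT).
by have := proper_card ZB; lia.
Qed.

Lemma min_eq n (G : {set {set 'I_n}}) B Z :
  minimal_in G B -> Z \in G -> Z \subset B -> Z = B.
Proof.
move=> /andP[_ hB] ZG ZB; apply/eqP; apply/negPn/negP => nZB.
move/existsP: hB; apply; exists Z; rewrite ZG properEneq nZB ZB.
done.
Qed.

Lemma max_eq n (G : {set {set 'I_n}}) A Z :
  maximal_in G A -> Z \in G -> A \subset Z -> Z = A.
Proof.
move=> /andP[_ hA] ZG AZ; apply/eqP; apply/negPn/negP => nZA.
move/existsP: hA; apply; exists Z; rewrite ZG properEneq eq_sym nZA AZ.
done.
Qed.

Lemma min_G n (G : {set {set 'I_n}}) B : minimal_in G B -> B \in G.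
Proof. by case/andP. Qed.
Lemma max_G n (G : {set {set 'I_n}}) B : maximal_in G B -> B \in G.
Proof. by case/andP. Qed.

Lemma betw_min n (G : {set {set 'I_n}}) T B :
  between G T -> minimal_in G B -> B \subset T.
Proof.
case/andP => h _ mB; apply: subset_trans h.
exact: (@bigcup_sup _ _ B (minimal_in G) (fun x => x) mB).
Qed.

Lemma betw_max n (G : {set {set 'I_n}}) T A :
  between G T -> maximal_in G A -> T \subset A.
Proof.
case/andP => _ h mA; apply: subset_trans h _.
exact: (@bigcap_inf _ _ A (maximal_in G) (fun x => x) mA).
Qed.

Lemma betwI n (G : {set {set 'I_n}}) (T : {set 'I_n}) :
  (forall B, minimal_in G B -> B \subset T) ->
  (forall A, maximal_in G A -> T \subset A) -> between G T.
Proof.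
by move=> h1 h2; rewrite /between; apply/andP; split;
  [apply/bigcupsP | apply/bigcapsP].
Qed.

Lemma F1 n (F G : {set {set 'I_n}}) M X :
  ~ contains_induced_N F -> is_component F G -> M \in F -> between G M ->
  X \in G -> ~~ set_comparable X M -> between G X.
Proof.
move=> NF hc MF bM XG nXM.
have XF := G_F hc XG.
apply: betwI.
- move=> B' mB'; apply/negPn/negP => nB'X; apply: NF.
  have [B mB BX] := ex_min XG.
  have B'G := min_G mB'; have BG := min_G mB.
  have BM := betw_min bM mB; have B'M := betw_min bM mB'.
  have incBB' : ~~ set_comparable B B'.
    apply: incP; apply/negP => h.
      by move: nB'X; rewrite -(min_eq mB' BG h) BX.
    by move: nB'X; rewrite (min_eq mB B'G h) BX.
  apply: (mkN (a := B') (b := B) (c := M) (d := X)) => //.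
  + exact: G_F hc B'G.
  + exact: G_F hc BG.
  + rewrite properEneq B'M andbT; apply/eqP => e.
    by move: incBB'; rewrite /set_comparable e BM.
  + rewrite properEneq BM andbT; apply/eqP => e.
    by move: nXM; rewrite /set_comparable -e BX orbT.
  + rewrite properEneq BX andbT; apply/eqP => e.
    by move: nXM; rewrite /set_comparable -e BM.
  + exact: inc_sym.
  + apply: incP => //; apply/negP => h.
    by move: nB'X; rewrite -(min_eq mB' XG h) subxx.
  + exact: inc_sym.
- move=> A' mA'; apply/negPn/negP => nXA'; apply: NF.
  have [A mA XA] := ex_max XG.
  have A'G := max_G mA'; have AG := max_G mA.
  have MA := betw_max bM mA; have MA' := betw_max bM mA'.
  apply: (mkN (a := X) (b := M) (c := A) (d := A')) => //.
  + exact: G_F hc AG.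
  + exact: G_F hc A'G.
  + rewrite properEneq XA andbT; apply/eqP => e.
    by move: nXM; rewrite /set_comparable e MA orbT.
  + rewrite properEneq MA andbT; apply/eqP => e.
    by move: nXM; rewrite /set_comparable e XA.
  + rewrite properEneq MA' andbT; apply/eqP => e.
    have := max_eq mA' AG; rewrite -e MA => /(_ isT) e2.
    by move: nXA'; rewrite -e -e2 XA.
  + apply: incP => //; apply/negP => h.
    by move: nXA'; rewrite (max_eq mA' XG h) subxx.
  + apply: incP; apply/negP => h.
      by move: nXA'; rewrite (max_eq mA A'G h) XA.
    by move: nXA'; rewrite -(max_eq mA' AG h) XA.
Qed.

Theorem lemma2p6 (n : nat) (F G : {set {set 'I_n}}) (M : {set 'I_n}) :
  0 < n ->
  N_saturated F ->
  is_component F G ->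
  M \in F ->
  between G M ->
  (forall M' : {set 'I_n}, M' \in F -> between G M' -> M \subset M' -> M' = M) ->
  forall X, X \in G -> set_comparable X M.
Proof.
move=> _ [NF sat] hc MF bM Mmax X XG.
case: (boolP (set_comparable X M)) => // nXM; exfalso.
have XF := G_F hc XG.
pose P := [set T in F | between G T].
pose V := \bigcup_(T in P) T.
have subV : forall T, T \in F -> between G T -> T \subset V.
  move=> T TF bT; apply: (@bigcup_sup _ _ T (fun T => T \in P) (fun x => x)).
  by rewrite inE TF.
have bX := F1 NF hc MF bM XG nXM.
have XV := subV X XF bX.
have MV := subV M MF bM.
have Vmax : forall A, maximal_in G A -> V \subset A.
  move=> A mA; apply/bigcupsP => T; rewrite inE => /andP[_ bT].
  exact: betw_max bT mA.
have bV : between G V.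
  apply: betwI => [B mB|]; last exact: Vmax.
  exact: subset_trans (betw_min bM mB) MV.
have VnF : V \notin F.
  apply/negP => VF; have VM := Mmax V VF bV MV.
  by move: nXM; rewrite /set_comparable -VM XV.
have [A0 mA0 XA0] := ex_max XG.
have VpA : forall A, maximal_in G A -> V \proper A.
  move=> A mA; rewrite properEneq Vmax // andbT.
  apply/eqP => e; move: VnF; rewrite e (G_F hc (max_G mA)).
  done.
have K : forall x, x \in G -> (forall A, maximal_in G A -> x \subset A) ->
    x \subset V.
  move=> x xG xA.
  case: (boolP (set_comparable x M)) => [/orP[xM|Mx]|nxM].
  - exact: subset_trans xM MV.
  - apply: subV; first exact: G_F hc xG.
    apply: betwI => // B mB; exact: subset_trans (betw_min bM mB) Mx.
  - apply: subV; first exact: G_F hc xG.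
    exact: F1 NF hc MF bM xG nxM.
have inGof : forall x, x \in F -> x != set0 -> x \subset A0 -> x \in G.
  move=> x xF x0 xA; have xA2 := xA; apply: (down_closed hc (max_G mA0)) xA.
  rewrite innerE xF x0 /=; apply/eqP => xT.
  have := G_inner hc (max_G mA0); rewrite innerE => /and3P[_ _ /eqP[]].
  by apply/eqP; rewrite eqEsubset subsetT /= -xT xA2.
have ne0 : forall x y : {set 'I_n}, ~~ set_comparable x y -> x != set0.
  by move=> x y; apply: contraNneq => ->; rewrite /set_comparable sub0set.
have PV : forall T, T \in P -> T \in F /\ T \subset V.
  move=> T; rewrite inE => /andP[TF bT]; split => //; exact: subV.
have Vsub : forall D : {set 'I_n}, (forall T : {set 'I_n}, T \in P -> T \subset D) -> V \subset D.
  by move=> D h; apply/bigcupsP.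
clearbody V.
have [a [b [c [d [[aF bF cF dF] _ [ac bc bd] [nab nad ncd]]]]]] := sat V VnF.
have inF : forall x, x \in V |: F -> x != V -> x \in F.
  by move=> x; rewrite in_setU1 => /orP[/eqP->|//]; rewrite eqxx.
case: (eqVneq a V) => [ea|naV].
  subst a.
  have bF' := inF b bF (neS (ne_inc nab)).
  have cF' := inF c cF (neS (ne_pr ac)).
  have dF' := inF d dF (neS (ne_inc nad)).
  suff : V \subset d by move: nad; rewrite /set_comparable => /negP + h; apply; rewrite h.
  apply: Vsub => T /PV[TF TV].
  case: (boolP (T \subset b)) => Tb; first exact: subset_trans Tb (proper_sub bd).
  apply/negPn/negP => Td; apply: NF.
  apply: (mkN (a := T) (b := b) (c := c) (d := d)) => //.
  - exact: sub_proper_trans TV ac.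
  - apply: incP => //; apply/negP => bT.
    by move: nab; rewrite /set_comparable (subset_trans bT TV) orbT.
  - apply: incP => //; apply/negP => dT.
    by move: nad; rewrite /set_comparable (subset_trans dT TV) orbT.
have aF' := inF a aF naV.
case: (eqVneq b V) => [eb|nbV].
  subst b.
  have cF' := inF c cF (neS (ne_pr bc)).
  have dF' := inF d dF (neS (ne_pr bd)).
  suff : V \subset a by move: nab; rewrite /set_comparable => /negP + h; apply; rewrite h orbT.
  apply: Vsub => T /PV[TF TV].
  apply/negPn/negP => Ta; apply: NF.
  apply: (mkN (a := a) (b := T) (c := c) (d := d)) => //.
  - exact: sub_proper_trans TV bc.
  - exact: sub_proper_trans TV bd.
  - apply: incP => //; apply/negP => aT.
    by move: nab; rewrite /set_comparable (subset_trans aT TV).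
have bF' := inF b bF nbV.
case: (eqVneq c V) => [ec|ncV].
  subst c.
  have dF' := inF d dF (neS (ne_inc ncd)).
  have dA : forall A, maximal_in G A -> d \subset A.
    move=> A mA; apply/negPn/negP => dA; apply: NF.
    apply: (mkN (a := a) (b := b) (c := A) (d := d)) => //.
    - exact: G_F hc (max_G mA).
    - exact: proper_sub_trans ac (Vmax A mA).
    - exact: proper_sub_trans bc (Vmax A mA).
    - apply: incP => //; apply/negP => Ad.
      by move: ncd; rewrite /set_comparable (subset_trans (Vmax A mA) Ad).
  have dG : d \in G.
    apply: inGof => //; last exact: dA.
    exact: ne0 (inc_sym ncd).
  have := K d dG dA.
  by move: ncd; rewrite /set_comparable => /negP + h; apply; rewrite h orbT.
have cF' := inF c cF ncV.
case: (eqVneq d V) => [ed|ndV]; last first.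
  by apply: NF; apply: (mkN (a := a) (b := b) (c := c) (d := d)) => //; apply: inF.
subst d.
have aA : forall A, maximal_in G A -> a \subset A.
  move=> A mA; apply/negPn/negP => aA; apply: NF.
  apply: (mkN (a := a) (b := b) (c := c) (d := A)) => //.
  - exact: G_F hc (max_G mA).
  - exact: proper_sub_trans bd (Vmax A mA).
  - apply: incP => //; apply/negP => Aa.
    by move: nad; rewrite /set_comparable (subset_trans (Vmax A mA) Aa) orbT.
  - apply: incP; apply/negP => h.
      by move: aA; rewrite (subset_trans (proper_sub ac) h).
    by move: ncd; rewrite /set_comparable (subset_trans (Vmax A mA) h) orbT.
have aG : a \in G by apply: inGof => //; [exact: ne0 nab | exact: aA].
have := K a aG aA.
by move: nad; rewrite /set_comparable => /negP + h; apply; rewrite h.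
Qed.
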